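(* Assume a capacity is given as in the context, satisfying: whenever $f=0$ $m$-a.e. and $t>0$, $p_tf=0$ except on a set of capacity $0$. Then every $m$-thin set has capacity $0$.
   Context: $(E,\mathcal B(E),m)$ is a $\sigma$-finite measure space. $p_t(x,\cdot)$, $t\ge0$, is a transition probability function on $E$ (probability measures, jointly measurable in $(t,x)$, $p_0(x,A)=1_A(x)$, with the semigroup property $p_{s+t}=p_sp_t$); $p_tf(x)=\int f\,dp_t(x,\cdot)$. $(T_t)$ is a strongly continuous semigroup on $L_2(m)$ with $p_tf$ representing $T_tf$ for bounded measurable square-integrable $f$. $Rf(x)=\int_0^\infty e^{-t}p_tf(x)\,dt$. A set $N\in\mathcal B(E)$ is $m$-thin if there exists $B\in\mathcal B(E)$ with $m(B)=0$ and $N\subset\{x:R1_B(x)>0\}$. A capacity here is a monotone set function on $\mathcal B(E)$ (e.g. that of the potential theory of the associated Markov process) such that a countable union of sets of capacity $0$ has capacity $0$. *)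

(* Defs.v *)
From HB Require Import structures.
From mathcomp Require Import all_boot all_order all_algebra.
From mathcomp Require Import all_classical all_reals all_analysis.
From mathcomp Require Import measurable_realfun.
Set Implicit Arguments. Unset Strict Implicit. Unset Printing Implicit Defensive.
Import Order.TTheory GRing.Theory Num.Theory.
Import numFieldNormedType.Exports.
Local Open Scope classical_set_scope.
Local Open Scope ring_scope.

Section markov_defs.
Context {d : measure_display} {E : measurableType d} {R : realType}.

Definition ptf (p : R -> E -> probability E R) (t : R) (f : E -> R) (x : E)
  : \bar R := (\int[p t x]_y (f y)%:E)%E.

Definition transition_function (p : R -> E -> probability E R) : Prop :=
  [/\
      (forall A : set E, measurable A ->
         measurable_fun [set tx : R * E | 0 <= tx.1]
           (fun tx : (R * E)%type => (p tx.1 tx.2 A : \bar R))),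
      (forall (x : E) (A : set E), measurable A ->
         p 0 x A = (\1_A x)%:E) &
      (forall (s t : R) (x : E) (A : set E), 0 <= s -> 0 <= t -> measurable A ->
         p (s + t) x A = (\int[p s x]_y p t y A)%E)].

Definition L2 (m : {measure set E -> \bar R}) (f : E -> R) : Prop :=
  f \in Lfun m 2%:E.

Definition L2norm (m : {measure set E -> \bar R}) (f : E -> R) : R :=
  fine ('N[m]_2%:E[EFin \o f])%E.

(* (T_t)_{t >= 0} is a strongly continuous semigroup of bounded linear operators
   on L2(m); operators are given on representatives and are required to respect
   m-a.e. equality, so that they act on L2(m)-classes. *)
Definition L2_sc_semigroup (m : {measure set E -> \bar R})
    (T : R -> (E -> R) -> E -> R) : Prop :=
  [/\ (forall t f, 0 <= t -> L2 m f -> L2 m (T t f)) /\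
      (forall t f g, 0 <= t -> L2 m f -> L2 m g -> f = g %[ae m] ->
         T t f = T t g %[ae m]),
      (forall t (a : R) f g, 0 <= t -> L2 m f -> L2 m g ->
         T t (fun x => a * f x + g x) = (fun x => a * T t f x + T t g x) %[ae m]),
      (forall t, 0 <= t -> exists C : R, forall f, L2 m f ->
         L2norm m (T t f) <= C * L2norm m f),
      (forall f, L2 m f -> T 0 f = f %[ae m]) /\
      (forall s t f, 0 <= s -> 0 <= t -> L2 m f ->
         T (s + t) f = T s (T t f) %[ae m]) &
      (forall f, L2 m f ->
         L2norm m (fun x => T t f x - f x) @[t --> 0^'+] --> 0)].

Definition represents (m : {measure set E -> \bar R})
    (p : R -> E -> probability E R) (T : R -> (E -> R) -> E -> R) : Prop :=
  forall t (f : E -> R), 0 <= t -> measurable_fun setT f ->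
    (exists M : R, forall x, `|f x| <= M) -> L2 m f ->
    ptf p t f = EFin \o T t f %[ae m].

Definition resolvent (p : R -> E -> probability E R) (f : E -> R) (x : E)
  : \bar R :=
  (\int[lebesgue_measure]_(t in `[0%R, +oo[%classic)
      ((expR (- t))%:E * ptf p t f x))%E.

Definition m_thin (m : {measure set E -> \bar R})
    (p : R -> E -> probability E R) (N : set E) : Prop :=
  exists B : set E, [/\ measurable B, m B = 0%E &
    N `<=` [set x | (0 < resolvent p (\1_B) x)%E]].

Definition capacity (Cap : set E -> \bar R) : Prop :=
  [/\ (forall A, measurable A -> (0 <= Cap A)%E),
      (forall A B, measurable A -> measurable B -> A `<=` B ->
         (Cap A <= Cap B)%E) &
      (forall F : (set E)^nat, (forall n, measurable (F n)) ->
         (forall n, Cap (F n) = 0%E) -> Cap (\bigcup_n F n) = 0%E)].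

End markov_defs.

(* Main.v *)
Require Import Defs.
From HB Require Import structures.
From mathcomp Require Import all_boot all_order all_algebra.
From mathcomp Require Import all_classical all_reals all_analysis.
From mathcomp Require Import measurable_realfun.
Import Order.TTheory GRing.Theory Num.Theory.
Import numFieldNormedType.Exports.
Local Open Scope classical_set_scope.
Local Open Scope ring_scope.

Section proof.
Context (d : measure_display) (E : measurableType d) (R : realType).
Variable m : {measure set E -> \bar R}.
Hypothesis msf : sigma_finite setT m.
Definition mm : set E -> \bar R := m.
HB.instance Definition _ := Measure.on mm.
HB.instance Definition _ := @Measure_isSigmaFinite.Build _ _ _ mm msf.
Variable p : R -> E -> probability E R.
Hypothesis tf : transition_function p.
Variable T : R -> (E -> R) -> E -> R.
Hypothesis Tsg : L2_sc_semigroup m T.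
Hypothesis rep : represents m p T.
Variable B : set E.
Hypothesis mB : measurable B.
Hypothesis mB0 : m B = 0%E.

Local Open Scope ereal_scope.

Let P (t : R) (y : E) : \bar R := p t y B.

Lemma ptf_indic t y : ptf p t (\1_B) y = P t y.
Proof. by rewrite /ptf integral_indic// setIT. Qed.

Lemma L2_indic : L2 m (\1_B).
Proof.
rewrite /L2 inE; apply/andP; split.
  by rewrite inE /=; exact: measurable_indic.
rewrite inE /= /finite_norm unlock /Lnorm.
rewrite (eq_integral (fun x => (\1_B x)%:E)); last first.
  move=> x _; rewrite /= indicE; case: (x \in B) => /=.
    by rewrite normr1 powR1.
  by rewrite normr0 powR0.
by rewrite integral_indic// setIT mB0 poweR0r ?ltry// invr_neq0.
Qed.

Lemma P_ae0 s : (0 <= s)%R -> P s = (fun _ => 0) %[ae m].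
Proof.
move=> s0.
have L20 : L2 m (fun _ => 0%R).
  rewrite /L2 inE; apply/andP; split; first by rewrite inE /=.
  rewrite inE /= /finite_norm unlock /Lnorm.
  rewrite (eq_integral (fun _ => 0)); last by move=> x _; rewrite /= normr0 powR0.
  by rewrite integral0 poweR0r ?ltry// invr_neq0.
have B0 : (\1_B : E -> R) = (fun _ => 0%R) %[ae m].
  exists B; split => // y /= /not_implyP[_].
  by rewrite indicE; case: (boolP (y \in B)) => [/set_mem//|].
have mI : measurable_fun setT (\1_B : E -> R) by exact: measurable_indic.
have bI : exists M : R, forall x, (`|(\1_B : E -> R) x| <= M)%R.
  by exists 1%R => x; rewrite indicE; case: (_ \in _); rewrite ?normr1 ?normr0.
have h1 := @rep s (\1_B) s0 mI bI L2_indic.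
case: Tsg => [[_ Tae] Tlin _ _ _].
have h2 := Tae s _ _ s0 L2_indic L20 B0.
have h3 := Tlin s (-1)%R _ _ s0 L20 L20.
have E0 : @eq (E -> R) (fun x : E => (-1) * 0 + 0)%R (fun _ : E => 0%R).
  by apply/funext => x; rewrite mulr0 addr0.
rewrite E0 in h3.
near=> y => _.
rewrite -ptf_indic (near h1)// /= (near h2)// (near h3)//.
by rewrite mulN1r addNr.
Unshelve. all: by end_near.
Qed.

Let D0 : set (R * E) := [set tx | (0 <= tx.1)%R].
Let mD0 : measurable D0.
Proof.
have -> : D0 = `[0%R, +oo[%classic `*` setT.
  apply/seteqP; split => -[t x] /=; rewrite /D0 /= in_itv /= andbT //.
  by move=> [].
by apply: measurableX.
Qed.

Let Pf : R * E -> \bar R := (fun tx => p tx.1 tx.2 B) \_ D0.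

Let mPf : measurable_fun setT Pf.
Proof.
apply/(measurable_restrictT _ mD0); case: tf => mp _ _; exact: (mp B mB).
Qed.

Let H (q : R) (tx : R * E) : \bar R := Pf ((tx.1 - q)%R, tx.2).

Let mH q : measurable_fun setT (H q).
Proof.
apply: measurableT_comp mPf _ => /=.
apply/measurable_fun_pairP; split => /=.
  apply: measurable_funB => //; exact: measurable_fst.
exact: measurable_snd.
Qed.

Let H0 q tx : 0 <= H q tx.
Proof. by rewrite /H /Pf patchE; case: ifP. Qed.

Let HE q t y : H q (t, y) = if (0 <= t - q)%R then P (t - q) y else 0.
Proof.
rewrite /H /Pf patchE /=; case: ifPn => [/set_mem ->//|].
by rewrite notin_setE /D0 /= => /negP/negbTE ->.
Qed.


Let g q y := \int[lebesgue_measure]_t H q (t, y).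

Let mHl q : measurable_fun (T := (measurableTypeR R * E)%type) setT (H q) := mH q.

Let mg q : measurable_fun setT (g q).
Proof.
exact: (@measurable_fun_fubini_tonelli_G _ _ _ _ R (@lebesgue_measure R) (H q) (mHl q) (H0 q)). Qed.

Let g0 q y : 0 <= g q y.
Proof. by apply: integral_ge0 => t _. Qed.

Lemma g_ae0 q : g q = cst 0 %[ae mm].
Proof.
have int0 : \int[mm]_y g q y = 0.
  rewrite /g -(@fubini_tonelli _ _ _ _ R (@lebesgue_measure R) mm (H q) (mHl q) (H0 q)).
  apply: integral0_eq => t _.
  case: (boolP (0 <= t - q)%R) => tq.
    rewrite (ae_eq_integral (cst 0)) ?integral0//.
    - exact: measurable_fun_pair2 (mH q).
    - have h : \forall x \ae mm, setT x -> P (t - q)%R x = 0 := P_ae0 (t - q)%R tq.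
      by apply: filterS h => y /(_ I) hy _; rewrite HE tq hy.
  by apply: integral0_eq => y _; rewrite HE (negbTE tq).
apply/(ae_eq_integral_abs _ measurableT (mg q)).
rewrite -[RHS]int0; apply: eq_integral => y _; rewrite gee0_abs//.
Qed.

Let fq q y : R := fine (mine (g q y) 1).

Let fqE q y : (fq q y)%:E = mine (g q y) 1.
Proof.
rewrite /fq fineK// ge0_fin_numE; last by rewrite le_min g0 lee01.
by rewrite (le_lt_trans _ (ltry 1%R))// ge_min lexx orbT.
Qed.

Let mfq q : measurable_fun setT (fq q).
Proof.
apply: measurableT_comp => //; apply: measurable_mine => //; exact: mg.
Qed.

Let J q x t := \int[p q x]_y H q (t, y).

Let mJ q x : measurable_fun setT (J q x).
Proof.
exact: (@measurable_fun_fubini_tonelli_F _ _ _ _ R (p q x) (H q) (mHl q) (H0 q)).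
Qed.

Let mJl q x : measurable_fun (T := measurableTypeR R) setT (J q x) := mJ q x.

Let JE q x t : (0 <= q)%R -> J q x t = if (0 <= t - q)%R then P t x else 0.
Proof.
move=> q0; rewrite /J; case: ifPn => tq.
  under eq_integral => y _ do rewrite HE tq.
  case: tf => _ _ sg.
  by rewrite -sg// subrKC.
by apply: integral0_eq => y _; rewrite HE (negbTE tq).
Qed.

Lemma key q x : ptf p q (fq q) x = 0 -> \int[lebesgue_measure]_t J q x t = 0.
Proof.
move=> h.
have h1 : \int[p q x]_y mine (g q y) 1 = 0.
  by rewrite -h /ptf; apply: eq_integral => y _; rewrite fqE.
have h2 : (fun y => mine (g q y) 1) = cst 0 %[ae p q x].
  have hm : measurable_fun setT (fun y => mine (g q y) 1).
    by apply: measurable_mine => //; exact: mg.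
  apply/(ae_eq_integral_abs _ measurableT hm).
  rewrite -[RHS]h1; apply: eq_integral => y _; rewrite gee0_abs// le_min g0 lee01 //.
have h3 : \int[p q x]_y g q y = 0.
  rewrite (ae_eq_integral (cst 0)) ?integral0//.
  apply: filterS h2 => y /(_ I) /= hy _; move: hy.
  by rewrite minEle; case: ifP => // _ /eqP; rewrite onee_eq0.
rewrite /J (@fubini_tonelli _ _ _ _ R (@lebesgue_measure R) (p q x) (H q) (mHl q) (H0 q)).
exact: h3.
Qed.

Lemma main (Cap : set E -> \bar R) : capacity Cap ->
  (forall f : E -> R, measurable_fun setT f ->
     (exists M : R, forall x, (`|f x| <= M)%R) ->
     f = (fun _ => 0%R) %[ae m] ->
     forall t : R, (0 < t)%R ->
       exists Z : set E, [/\ measurable Z, Cap Z = 0%E &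
         forall x, ~ Z x -> ptf p t f x = 0%E]) ->
  forall N : set E, measurable N ->
    N `<=` [set x | (0 < resolvent p (\1_B) x)%E] -> Cap N = 0%E.
Proof.
move=> [C0 Cmono Cunion] hZ N mN NB.
pose q (n : nat) : R := ((n.+1)%:R^-1)%R.
have qgt0 n : (0 < q n)%R by rewrite /q invr_gt0.
have : forall n, exists Z : set E, [/\ measurable Z, Cap Z = 0%E &
         forall x, ~ Z x -> ptf p (q n) (fq (q n)) x = 0%E].
  move=> n; apply: hZ (mfq _) _ _ _ (qgt0 n).
    exists 1%R => y.
    rewrite ger0_norm; last by rewrite -lee_fin fqE le_min g0 lee01.
    by rewrite -lee_fin fqE ge_min lexx orbT.
  have h : \forall x \ae m, setT x -> g (q n) x = cst 0%R x := g_ae0 (q n).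
  apply: filterS h => y /(_ I) hy _.
  by rewrite /fq hy /= minEle lee01.
move=> /choice [Z hZn].
have sub : N `<=` \bigcup_n Z n.
  move=> x Nx; apply: contrapT => nZ.
  have nZn n : ~ Z n x by move=> ?; apply: nZ; exists n.
  have Jn n : \int[lebesgue_measure]_t J (q n) x t = 0.
    by apply: key; case: (hZn n) => _ _; apply.
  have ae1 n : \forall t \ae lebesgue_measure, setT t -> J (q n) x t = cst 0 t.
    apply/(ae_eq_integral_abs _ measurableT (mJl (q n) x)).
    rewrite -[RHS](Jn n); apply: eq_integral => t _; rewrite gee0_abs//.
    by apply: integral_ge0 => y _.
  have ae2 := ae_foralln ae1.
  have ae0 : \forall t \ae (@lebesgue_measure R), t != 0%R.
    exists [set 0%R]; split => //; first exact: lebesgue_measure_set1.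
    by move=> t /= /negP; rewrite negbK => /eqP.
  have : resolvent p (\1_B) x = 0.
    rewrite /resolvent.
    transitivity (\int[lebesgue_measure]_(t in `[0%R, +oo[%classic)
        ((expR (- t))%:E * J 0%R x t)).
      apply: eq_integral => t /set_mem; rewrite /= in_itv /= andbT => t0.
      by rewrite ptf_indic JE// subr0 t0.
    rewrite (ae_eq_integral (cst 0)) ?integral0//.
    - apply: emeasurable_funM.
        by apply/measurable_EFinP; apply: measurableT_comp => //.
      exact: measurable_funTS (mJl 0%R x).
    - apply: filterS2 ae2 ae0 => t h tn0; rewrite /= in_itv /= andbT => t0.
      have tgt0 : (0 < t)%R by rewrite lt0r tn0.
      have [k hk] := ltr_add_invr tgt0.
      rewrite add0r in hk.
      have := h k I; rewrite /cst JE ?(ltW (qgt0 k))// subr_ge0 (ltW hk) => hP.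
      by rewrite JE// subr0 t0 hP mule0.
  by have := NB x Nx; rewrite /= => /[swap] ->; rewrite ltxx.
apply/eqP; rewrite eq_le C0 // andbT.
rewrite -(Cunion Z); first last.
- by move=> n; case: (hZn n).
- by move=> n; case: (hZn n).
apply: Cmono => //; apply: bigcupT_measurable => n; by case: (hZn n).
Qed.

End proof.

Theorem lemma2p19 (d : measure_display) (E : measurableType d) (R : realType)
    (m : {measure set E -> \bar R}) (p : R -> E -> probability E R)
    (T : R -> (E -> R) -> E -> R) (Cap : set E -> \bar R) :
  sigma_finite setT m ->
  transition_function p ->
  L2_sc_semigroup m T ->
  represents m p T ->
  capacity Cap ->
  (forall f : E -> R, measurable_fun setT f ->
     (exists M : R, forall x, `|f x| <= M) ->
     f = (fun _ => 0) %[ae m] ->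
     forall t : R, 0 < t ->
       exists Z : set E, [/\ measurable Z, Cap Z = 0%E &
         forall x, ~ Z x -> ptf p t f x = 0%E]) ->
  forall N : set E, measurable N -> m_thin m p N -> Cap N = 0%E.
Proof.
move=> msf tf Tsg rep capC hZ N mN [B [mB mB0 NB]].
exact: (@main _ _ _ _ msf _ tf _ Tsg rep _ mB mB0 _ capC hZ _ mN NB).
Qed.
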